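(* Let $M$ be a matroid on $E=\{1,\dots,n\}$ such that $E$ admits a good partition $(E_1,E_2)$ with respect to $M$, and let $M'$ be a relaxation of $M$. Then $P(M')$ has a nontrivial hyperplane split.
   Context: A relaxation of $M$ is the matroid $M'$ on $E$ with $\mathcal{B}(M')=\mathcal{B}(M)\cup\{X\}$, where $X\subseteq E$ is a set that is both a circuit and a hyperplane (closed set of rank $r-1$) of $M$, $r$ the rank of $M$. For a matroid $N$ on $E$, $P(N)=\mathrm{conv}\{\sum_{i\in B}e_i : B\in\mathcal{B}(N)\}\subset\mathbb{R}^n$. A hyperplane split of $P(N)$ is an expression $P(N)=P(N_1)\cup P(N_2)$ with $N_1,N_2$ matroids on $E$ such that $P(N_1)\cap P(N_2)$ is a face of both; it is nontrivial if $P(N_1)\neq P(N)\neq P(N_2)$. For $A\subseteq E$, $M|_A$ is the restriction, $\mathcal{I}(\cdot)$ the independent sets. A partition $(E_1,E_2)$ of $E$ with $r_i$ the rank of $M|_{E_i}$ and $r_i>1$ is a good partition if there exist integers $0<a_1<r_1$, $0<a_2<r_2$ with (P1) $r_1+r_2=r+a_1+a_2$ and (P2) for every $X\in\mathcal{I}(M|_{E_1})$ with $|X|\le r_1-a_1$ and every $Y\in\mathcal{I}(M|_{E_2})$ with $|Y|\le r_2-a_2$, $X\cup Y\in\mathcal{I}(M)$. *)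

(* Defs.v *)
From HB Require Import structures.
From mathcomp Require Import all_boot all_order all_algebra.
Set Implicit Arguments. Unset Strict Implicit. Unset Printing Implicit Defensive.
Import Order.TTheory GRing.Theory Num.Theory.

(* A matroid on E = 'I_n (= {1,...,n} up to relabelling) is given by its
   family of bases B : {set {set 'I_n}}. *)
Definition is_matroid (n : nat) (B : {set {set 'I_n}}) : Prop :=
  B != set0 /\
  forall B1 B2, B1 \in B -> B2 \in B -> forall x, x \in B1 :\: B2 ->
    exists2 y, y \in B2 :\: B1 & (y |: (B1 :\ x)) \in B.

Definition indep (n : nat) (B : {set {set 'I_n}}) (X : {set 'I_n}) : bool :=
  [exists Y in B, X \subset Y].

Definition rk (n : nat) (B : {set {set 'I_n}}) (A : {set 'I_n}) : nat :=
  \max_(X : {set 'I_n} | indep B X && (X \subset A)) #|X|.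

Definition mrank (n : nat) (B : {set {set 'I_n}}) : nat := rk B setT.

Definition circuit (n : nat) (B : {set {set 'I_n}}) (C : {set 'I_n}) : bool :=
  ~~ indep B C && [forall x in C, indep B (C :\ x)].

Definition closed_set (n : nat) (B : {set {set 'I_n}}) (X : {set 'I_n}) : bool :=
  [forall x in ~: X, rk B X < rk B (x |: X)].

Definition hyperplane (n : nat) (B : {set {set 'I_n}}) (X : {set 'I_n}) : bool :=
  closed_set B X && (rk B X == (mrank B).-1).

Definition circuit_hyperplane (n : nat) (B : {set {set 'I_n}}) (X : {set 'I_n}) :=
  circuit B X && hyperplane B X.

Definition relaxation (n : nat) (B : {set {set 'I_n}}) (X : {set 'I_n}) :
  {set {set 'I_n}} := X |: B.

Definition good_partition (n : nat) (B : {set {set 'I_n}}) (E1 E2 : {set 'I_n}) : Prop :=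
  E1 :|: E2 = setT /\ E1 :&: E2 = set0 /\
  1 < rk B E1 /\ 1 < rk B E2 /\
  exists a1 a2 : nat,
    [/\ 0 < a1 < rk B E1, 0 < a2 < rk B E2,
        rk B E1 + rk B E2 = mrank B + a1 + a2 &
        forall X Y : {set 'I_n},
          indep B X -> X \subset E1 -> #|X| <= rk B E1 - a1 ->
          indep B Y -> Y \subset E2 -> #|Y| <= rk B E2 - a2 ->
          indep B (X :|: Y)].

Local Open Scope ring_scope.

Definition point (R : realFieldType) (n : nat) := 'I_n -> R.

Definition mpolytope (R : realFieldType) (n : nat) (B : {set {set 'I_n}})
  (x : point R n) : Prop :=
  exists lam : {set 'I_n} -> R,
    [/\ forall S, 0 <= lam S,
        \sum_(S in B) lam S = 1 &
        forall i, x i = \sum_(S in B) lam S * (i \in S)%:R].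

Arguments mpolytope R {n} B x.

Definition set_eq (R : realFieldType) (n : nat) (P Q : point R n -> Prop) :=
  forall x, P x <-> Q x.

(* F is a face of the polytope P: the intersection of P with a supporting
   hyperplane {a.x = b} where a.x <= b on P (a = 0, b = 0 gives P itself). *)
Definition face (R : realFieldType) (n : nat) (F P : point R n -> Prop) : Prop :=
  exists (a : 'I_n -> R) (b : R),
    (forall x, P x -> \sum_i a i * x i <= b) /\
    (forall x, F x <-> (P x /\ \sum_i a i * x i = b)).

Definition has_nontrivial_hyperplane_split (R : realFieldType) (n : nat)
  (B : {set {set 'I_n}}) : Prop :=
  exists B1 B2 : {set {set 'I_n}},
    [/\ is_matroid B1, is_matroid B2,
        set_eq (mpolytope R B) (fun x => mpolytope R B1 x \/ mpolytope R B2 x),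
        face (fun x => mpolytope R B1 x /\ mpolytope R B2 x) (mpolytope R B1) &
        face (fun x => mpolytope R B1 x /\ mpolytope R B2 x) (mpolytope R B2)] /\
    ~ set_eq (mpolytope R B1) (mpolytope R B) /\
    ~ set_eq (mpolytope R B2) (mpolytope R B).

(* Main.v *)
Require Import Defs.
From HB Require Import structures.
From mathcomp Require Import all_boot all_order all_algebra.
From Stdlib Require Import Lia.
Set Implicit Arguments. Unset Strict Implicit. Unset Printing Implicit Defensive.

Ltac tolia := repeat (match goal with |- is_true _ -> _ => let h := fresh "h" in intro h | |- _ = _ -> _ => let h := fresh "h" in intro h end); repeat match goal with
 | H : is_true (_ <= _) |- _ => apply (elimT ssrnat.leP) in H
 | H : is_true (_ < _) |- _ => apply (elimT ssrnat.ltP) in H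
 | H : is_true (_ == _) |- _ => apply (elimT eqP) in H
 | |- is_true (_ <= _) => apply/ssrnat.leP
 | |- is_true (_ < _) => apply/ssrnat.ltP
 | |- is_true (_ == _) => apply/eqP
 end; unfold addn, subn, muln in *; lia.

Lemma sub_card_eq (T : finType) (A C : {set T}) :
  A \subset C -> #|C| <= #|A| -> A = C.
Proof. by move=> sAC le; apply/eqP; rewrite eqEcard sAC. Qed.

Section Mat.
Variable n : nat.
Variable B : {set {set 'I_n}}.
Hypothesis HB : is_matroid B.

Lemma indep_sub (I J : {set 'I_n}) : indep B J -> I \subset J -> indep B I.
Proof.
move=> /existsP [Y /andP [YB JY]] IJ; apply/existsP; exists Y.
by rewrite YB (subset_trans IJ JY).
Qed.

Lemma basis_indep S : S \in B -> indep B S.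
Proof. by move=> SB; apply/existsP; exists S; rewrite SB subxx. Qed.

Lemma bases_card_k k : forall S1 S2, S1 \in B -> S2 \in B ->
  #|S1 :\: S2| = k -> #|S1| = #|S2|.
Proof.
case: HB => _ Hex.
elim: k => [|k IH] S1 S2 S1B S2B.
  move/eqP; rewrite cards_eq0 setD_eq0 => S12.
  have [S21|] := boolP (S2 \subset S1).
    by have -> : S1 = S2 by apply/eqP; rewrite eqEsubset S12 S21.
  case/subsetPn => y yS2 yS1.
  have yD : y \in S2 :\: S1 by rewrite inE yS1 yS2.
  have [z] := Hex S2 S1 S2B S1B y yD.
  by rewrite inE => /andP [zS2 zS1]; move/subsetP: S12 => /(_ z zS1); rewrite (negbTE zS2).
move=> Hk.
have : (S1 :\: S2) != set0 by rewrite -card_gt0 Hk.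
case/set0Pn => x xD.
have [y yD yB] := Hex S1 S2 S1B S2B x xD.
move: xD yD; rewrite !inE => /andP [xS2 xS1] /andP [yS1 yS2].
have <- : #|(y |: (S1 :\ x))| = #|S1|.
  rewrite cardsU1 in_setD1 (negbTE yS1) andbF /= (cardsD1 x S1) xS1.
  by [].
apply: IH => //.
have -> : (y |: S1 :\ x) :\: S2 = (S1 :\: S2) :\ x.
  apply/setP => i; rewrite !inE.
  case: eqVneq => [->|ne] /=; first rewrite (negbTE yS1) !andbF andbT. by apply/negbF.
  by rewrite andbCA.
move: Hk; rewrite (cardsD1 x (S1 :\: S2)) !inE xS1 xS2 /=.
by rewrite add1n; case.
Qed.

Lemma bases_card S1 S2 : S1 \in B -> S2 \in B -> #|S1| = #|S2|.
Proof. by move=> h1 h2; apply: (bases_card_k h1 h2 erefl). Qed.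

Local Notation r := (mrank B).

Lemma indep_rk (I A : {set 'I_n}) : indep B I -> I \subset A -> #|I| <= rk B A.
Proof.
move=> iI IA; rewrite /rk.
by apply: (@leq_bigmax_cond _ (fun X : {set 'I_n} => indep B X && (X \subset A)) (fun X => #|X|) I); rewrite iI IA.
Qed.

Lemma rk_le (A : {set 'I_n}) k :
  (forall I, indep B I -> I \subset A -> #|I| <= k) -> rk B A <= k.
Proof. by move=> H; apply/bigmax_leqP => I /andP [h1 h2]; apply: H. Qed.

Lemma rk_ex (A : {set 'I_n}) k : k < rk B A ->
  exists I, [/\ indep B I, I \subset A & k < #|I|].
Proof.
move=> lt.
have [/existsP [I /and3P [h1 h2 h3]]|/existsPn H] :=
  boolP [exists I : {set 'I_n}, [&& indep B I, I \subset A & k < #|I|]].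
  by exists I.
exfalso; move: lt; apply/negP; rewrite -leqNgt; apply: rk_le => I iI IA.
by move: (H I); rewrite iI IA /= -leqNgt.
Qed.

Lemma basis_card S : S \in B -> #|S| = r.
Proof.
move=> SB; apply/eqP; rewrite eqn_leq; apply/andP; split.
  by apply: indep_rk; [apply: basis_indep | apply: subsetT].
apply: rk_le => I /existsP [Y /andP [YB IY]] _.
by rewrite (bases_card SB YB) subset_leq_card.
Qed.

Lemma indep_card I : indep B I -> #|I| <= r.
Proof. by move=> iI; apply: indep_rk => //; apply: subsetT. Qed.

Lemma indep_full I : indep B I -> r <= #|I| -> I \in B.
Proof.
case/existsP => Y /andP [YB IY] le.
by rewrite (@sub_card_eq _ I Y) // (basis_card YB).
Qed.

Lemma one_more (S T : {set 'I_n}) : S \in B -> T \subset S -> #|T| = r.-1 -> 0 < r ->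
  exists u, u \notin T /\ S = u |: T.
Proof.
move=> SB TS cT r0.
have : #|S :\: T| == 1.
  by rewrite cardsD (setIidPr TS) cT (basis_card SB); apply/eqP; tolia.
case/cards1P => u Hu.
have uS : u \in S :\: T by rewrite Hu set11.
move: (uS); rewrite inE => /andP [uT _]; exists u; split => //.
apply/setP => i; rewrite in_setU1.
case: eqVneq => [->|ne]; first by move: uS; rewrite inE => /andP [].
have [iT|iT] := boolP (i \in T); first by rewrite (subsetP TS).
apply/negbTE; apply: contra ne => iS.
have : i \in S :\: T by rewrite inE iT iS.
by rewrite Hu inE.
Qed.


Variable X : {set 'I_n}.
Hypothesis HX : circuit_hyperplane B X.
Hypothesis r2 : 1 < r.

Lemma X_nindep : ~~ indep B X.
Proof. by case/andP: HX => /andP []. Qed.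

Lemma X_notB : X \notin B.
Proof. by apply: contra X_nindep; apply: basis_indep. Qed.

Lemma Xx_indep x : x \in X -> indep B (X :\ x).
Proof. by case/andP: HX => /andP [_ /forallP H] _ xX; move: (H x); rewrite xX. Qed.

Lemma rk_X : rk B X = r.-1.
Proof. by case/andP: HX => _ /andP [_ /eqP]. Qed.

Lemma closed_X y : y \notin X -> rk B X < rk B (y |: X).
Proof. by case/andP: HX => _ /andP [/forallP H _] yX; move: (H y); rewrite inE yX. Qed.

Lemma X_n0 : X != set0.
Proof.
apply: contra X_nindep => /eqP ->.
case: HB => /set0Pn [S SB] _.
by apply: (indep_sub (basis_indep SB)); apply: sub0set.
Qed.

Lemma card_X : #|X| = r.
Proof.
have [x xX] : exists x, x \in X by apply/set0Pn; apply: X_n0.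
have h1 : #|X :\ x| <= r.-1 by rewrite -rk_X; apply: indep_rk; [apply: Xx_indep | apply: subD1set].
have : r.-2 < rk B X by rewrite rk_X; tolia.
case/rk_ex => J [iJ JX lt].
have JnX : J != X by apply: contraNneq X_nindep => <-.
have : #|J| < #|X| by apply: proper_card; rewrite properEneq JnX JX.
move: h1; rewrite (cardsD1 x X) xX add1n => h1 h2; tolia.
Qed.

Lemma factF x y : x \in X -> y \notin X -> y |: (X :\ x) \in B.
Proof.
move=> xX yX.
case: (HB) => _ Hex.
have : r.-1 < rk B (y |: X) by rewrite -rk_X; apply: closed_X.
case/rk_ex => I [iI IyX ltI].
have IB : I \in B by apply: indep_full => //; tolia.
have yI : y \in I.
  apply: contraLR ltI => yI; rewrite -leqNgt -rk_X; apply: indep_rk => //.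
  apply/subsetP => i iI'; move/subsetP: IyX => /(_ i iI'); rewrite in_setU1.
  by case: eqVneq => [ei|] //=; rewrite -ei iI' in yI.
have := Xx_indep xX; case/existsP => Y /andP [YB XY].
have cXx : #|X :\ x| = r.-1 by move: card_X; rewrite (cardsD1 x X) xX add1n; tolia.
have [u [uXx Yu]] := one_more YB XY cXx (ltnW r2).
have uX : u \notin X.
  move: uXx; rewrite in_setD1 negb_and negbK; case: eqVneq => [eu|] //= _.
  by move: YB; rewrite Yu eu setD1K // (negbTE X_notB).
have [ey|ney] := eqVneq u y; first by rewrite -ey -Yu.
have uD : u \in Y :\: I.
  rewrite inE Yu setU11 andbT; apply/negP => uI.
  by move/subsetP: IyX => /(_ u uI); rewrite in_setU1 (negbTE ney) (negbTE uX).
have [z zD zB] := Hex Y I YB IB u uD.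
move: zD; rewrite inE => /andP [zY zI].
have Yu' : Y :\ u = X :\ x.
  by rewrite Yu setU1K.
move: zB; rewrite Yu'.
have [ezy|nezy] := eqVneq z y; first by rewrite ezy.
have zX : z \in X.
  by move/subsetP: IyX => /(_ z zI); rewrite in_setU1 (negbTE nezy).
have ezx : z = x.
  apply/eqP; apply: contraNT zY => nzx; rewrite Yu in_setU1 in_setD1 nzx zX.
  by rewrite orbT.
by rewrite ezx setD1K // (negbTE X_notB).
Qed.


Definition NB := [set S in relaxation B X | r.-1 <= #|S :&: X|].

Lemma XN : X \in NB.
Proof. by rewrite inE /relaxation setU11 setIid card_X leq_pred. Qed.

Lemma cardIX_le S : S \in B -> #|S :&: X| <= r.-1.
Proof.
move=> SB; rewrite -rk_X; apply: indep_rk; last by apply: subsetIr.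
by apply: (indep_sub (basis_indep SB)); apply: subsetIl.
Qed.

Lemma struct S : S \in B -> #|S :&: X| = r.-1 ->
  exists u v, [/\ u \notin X, v \in X & S = u |: (X :\ v)].
Proof.
move=> SB cS.
have [u [uT Su]] := one_more SB (subsetIl S X) cS (ltnW r2).
have uS : u \in S by rewrite Su setU11.
have uX : u \notin X by move: uT; rewrite inE uS.
have : #|X :\: S| == 1.
  by rewrite cardsD setIC cS card_X; apply/eqP; tolia.
case/cards1P => v Hv.
have vXS : v \in X :\: S by rewrite Hv set11.
exists u, v; split => //; first by move: vXS; rewrite inE => /andP [].
rewrite {1}Su; congr (_ |: _); apply/setP => i; rewrite !inE.
case: eqVneq => [->|ne] /=; first by move: vXS; rewrite inE => /andP [/negbTE -> _].
have [iX|iX] := boolP (i \in X); rewrite ?andbF ?andbT //.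
apply/negPn; apply: contra ne => iS.
have : i \in X :\: S by rewrite inE iS iX.
by rewrite Hv inE.
Qed.


Lemma uXv_cap u v : u \notin X -> v \in X -> (u |: (X :\ v)) :&: X = X :\ v.
Proof.
move=> uX vX; apply/setP => i; rewrite !inE.
  by case: eqVneq => [->|] /=; rewrite ?(negbTE uX) ?andbF // -andbA andbb.
Qed.

Lemma uXv_card u v : u \notin X -> v \in X -> #|(u |: (X :\ v)) :&: X| = r.-1.
Proof.
by move=> uX vX; rewrite uXv_cap // ; move: card_X; rewrite (cardsD1 v X) vX add1n; tolia.
Qed.

Lemma uXv_N u v : u \notin X -> v \in X -> u |: (X :\ v) \in NB.
Proof.
move=> uX vX; rewrite inE /relaxation in_setU1 factF // orbT uXv_card //=.
Qed.

Lemma NB_case S : S \in NB -> S = X \/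
  exists u v, [/\ u \notin X, v \in X & S = u |: (X :\ v)].
Proof.
rewrite inE /relaxation in_setU1 => /andP [/orP [/eqP ->|SB] le]; first by left.
right; apply: struct => //; apply/eqP; rewrite eqn_leq le cardIX_le //.
Qed.

Lemma NB_matroid : is_matroid NB.
Proof.
split; first by apply/set0Pn; exists X; apply: XN.
move=> B1 B2 B1N B2N x; rewrite inE => /andP [xB2 xB1].
case: (NB_case B1N) => [E1|[u1 [v1 [u1X v1X E1]]]];
case: (NB_case B2N) => [E2|[u2 [v2 [u2X v2X E2]]]]; subst B1 B2.
- by rewrite xB1 in xB2.
-
  have exv : x = v2.
    apply/eqP; apply: contraNT xB2 => nx; rewrite in_setU1 in_setD1 nx xB1.
    by rewrite orbT.
  exists u2; first by rewrite inE setU11 u2X.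
  by rewrite exv; apply: uXv_N.
-
  have exu : x = u1.
    by move: xB1; rewrite in_setU1 in_setD1 (negbTE xB2) andbF orbF => /eqP.
  have v1B1 : v1 \notin u1 |: (X :\ v1).
    rewrite in_setU1 in_setD1 eqxx /= orbF; apply: contraNneq u1X => <-; done.
  exists v1; first by rewrite inE v1B1 v1X.
  rewrite exu setU1K; last by rewrite in_setD1 (negbTE u1X) andbF.
  by rewrite setD1K // XN.
- have [xX|xX] := boolP (x \in X).
  + have exv : x = v2.
      apply/eqP; apply: contraNT xB2 => nx; rewrite in_setU1 in_setD1 nx xX.
      by rewrite orbT.
    have v1B1 : v1 \notin u1 |: (X :\ v1).
      rewrite in_setU1 in_setD1 eqxx /= orbF; apply: contraNneq u1X => <-; done.
    have nv : v1 != v2.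
      by apply: contraTneq xB1 => ev; rewrite exv -ev.
    exists v1; first by rewrite inE v1B1 in_setU1 in_setD1 nv v1X orbT.
    have -> : v1 |: (u1 |: X :\ v1) :\ x = u1 |: (X :\ v2).
      apply/setP => i; rewrite !inE exv.
      case: (eqVneq i v1) => [->|ne1] /=.
        by rewrite eq_sym nv v1X orbT.
      case: (eqVneq i v2) => [->|ne2] /=.
        by rewrite orbF; apply/esym/negbTE; apply: contraNneq u1X => <-.
      by [].
    by apply: uXv_N.
  + have exu : x = u1.
      by move: xB1; rewrite in_setU1 in_setD1 (negbTE xX) andbF orbF => /eqP.
    have nu : u2 != u1.
      by apply: contraNneq xB2 => eu; rewrite exu -eu setU11.
    exists u2.
      rewrite inE setU11 andbT in_setU1 in_setD1 (negbTE nu) (negbTE u2X) andbF.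
      by [].
    rewrite exu setU1K; last by rewrite in_setD1 (negbTE u1X) andbF.
    by apply: uXv_N.
Qed.

End Mat.
Import Order.TTheory GRing.Theory Num.Theory.
Local Open Scope ring_scope.

Section Poly.
Variable R : realFieldType.
Variable n : nat.
Implicit Types (A : {set {set 'I_n}}) (lam : {set 'I_n} -> R) (x : point R n).

Definition rep A lam x :=
  [/\ forall S, 0 <= lam S, \sum_(S in A) lam S = 1 &
      forall i, x i = \sum_(S in A) lam S * (i \in S)%:R].

Lemma repP A x : mpolytope R A x <-> exists lam, rep A lam x.
Proof. by []. Qed.

Lemma sum_delta A T (g : {set 'I_n} -> R) : T \in A ->
  \sum_(S in A) (S == T)%:R * g S = g T.
Proof.
move=> TA; rewrite (bigD1 T) //= eqxx mul1r big1 ?addr0 // => S /andP [_ /negbTE ->].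
by rewrite mul0r.
Qed.

Definition upd lam (c : R) T := fun S => lam S + c * (S == T)%:R.

Lemma sum_upd A lam c T (g : {set 'I_n} -> R) : T \in A ->
  \sum_(S in A) upd lam c T S * g S = \sum_(S in A) lam S * g S + c * g T.
Proof.
move=> TA; rewrite /upd.
under eq_bigr => S _ do rewrite mulrDl -mulrA.
by rewrite big_split /= -mulr_sumr sum_delta.
Qed.

Lemma supp_sum A A2 lam (g : {set 'I_n} -> R) :
  (forall S, S \in A -> lam S != 0 -> S \in A2) ->
  \sum_(S in A2) (if S \in A then lam S else 0) * g S = \sum_(S in A) lam S * g S.
Proof.
move=> H; rewrite big_mkcond [RHS]big_mkcond; apply: eq_bigr => S _.
case SA: (S \in A); case SA2: (S \in A2); rewrite ?mul0r //.
have [/eqP->|nz] := boolP (lam S == 0); first by rewrite mul0r.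
by move: (H S SA nz); rewrite SA2.
Qed.

Lemma mpoly_supp A A2 lam x : rep A lam x ->
  (forall S, S \in A -> lam S != 0 -> S \in A2) -> mpolytope R A2 x.
Proof.
move=> [h0 h1 h2] H; exists (fun S => if S \in A then lam S else 0); split.
- by move=> S; case: ifP.
- have := supp_sum (fun _ => 1) H.
  under eq_bigr => S _ do rewrite mulr1.
  by move=> ->; under eq_bigr => S _ do rewrite mulr1.
- by move=> i; rewrite h2 supp_sum.
Qed.

Lemma mpoly_sub A A2 x : A \subset A2 -> mpolytope R A x -> mpolytope R A2 x.
Proof.
move=> sub [lam hr]; apply: (mpoly_supp hr) => S SA _; exact: (subsetP sub).
Qed.

Lemma rep_delta A T : T \in A ->
  rep A (fun S => (S == T)%:R) (fun i => (i \in T)%:R).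
Proof.
move=> TA; split.
- by move=> S; case: (S == T).
- by have := sum_delta (fun _ => 1) TA; under eq_bigr => S _ do rewrite mulr1.
- by move=> i; rewrite sum_delta.
Qed.

Definition sX (X : {set 'I_n}) x := \sum_i (i \in X)%:R * x i.

Lemma card_sum (S X : {set 'I_n}) :
  \sum_i (i \in S)%:R * (i \in X)%:R = #|S :&: X|%:R :> R.
Proof.
rewrite -sum1_card natr_sum [RHS]big_mkcond /=; apply: eq_bigr => i _.
by rewrite inE; case: (i \in S); case: (i \in X); rewrite ?mul0r ?mul1r.
Qed.

Lemma sX_rep A lam x X : rep A lam x ->
  sX X x = \sum_(S in A) lam S * #|S :&: X|%:R.
Proof.
move=> [_ _ h2]; rewrite /sX.
under eq_bigr => i _ do rewrite h2 mulr_sumr.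
rewrite exchange_big /=; apply: eq_bigr => S _.
rewrite -card_sum mulr_sumr; apply: eq_bigr => i _.
by rewrite mulrCA [X in _ * X = _]mulrC.
Qed.

Lemma sum_le A (f g : {set 'I_n} -> R) :
  (forall S, S \in A -> f S <= g S) -> \sum_(S in A) f S <= \sum_(S in A) g S.
Proof. by move=> H; apply: ler_sum. Qed.

Lemma sum_lt A (f g : {set 'I_n} -> R) S0 : S0 \in A ->
  (forall S, S \in A -> f S <= g S) -> f S0 < g S0 ->
  \sum_(S in A) f S < \sum_(S in A) g S.
Proof.
move=> S0A H lt; rewrite (bigD1 S0) // [X in _ < X](bigD1 S0) //=.
by apply: ltr_leD => //; apply: ler_sum => S /andP [h _]; apply: H.
Qed.

Lemma sum_K A lam (K : R) : \sum_(S in A) lam S = 1 -> \sum_(S in A) lam S * K = K.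
Proof. by move=> h; rewrite -mulr_suml h mul1r. Qed.

End Poly.

Section Main.
Variable R : realFieldType.
Variable n : nat.
Variable B : {set {set 'I_n}}.
Hypothesis HB : is_matroid B.
Variable X : {set 'I_n}.
Hypothesis HX : circuit_hyperplane B X.
Hypothesis r2 : (1 < mrank B)%N.
Local Notation r := (mrank B).
Local Notation M' := (relaxation B X).
Implicit Types (lam : {set 'I_n} -> R) (x : point R n).

Definition dfc (S : {set 'I_n}) := (r.-1 - #|S :&: X|)%N.
Definition wt lam S := if (0 < dfc S)%N && (lam S != 0) then (2 ^ dfc S)%N else 0%N.
Definition meas lam := (\sum_(S in B) wt lam S)%N.

Lemma inM'B S : S \in B -> S \in M'.
Proof. by move=> SB; rewrite /relaxation in_setU1 SB orbT. Qed.

Lemma XM' : X \in M'.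
Proof. by rewrite /relaxation setU11. Qed.

Lemma multiset_id (C1 C2 B0 : {set 'I_n}) y z :
  y \notin X -> z \in X -> y \in B0 -> z \notin B0 ->
  C1 = y |: (X :\ z) -> C2 = z |: (B0 :\ y) ->
  forall i, (i \in C1)%:R + (i \in C2)%:R = (i \in X)%:R + (i \in B0)%:R :> R.
Proof.
move=> yX zX yB zB -> -> i.
have nyz : y != z by apply: contraNneq yX => ->.
rewrite !inE.
case: (eqVneq i y) => [->|ney] /=.
  by rewrite (negbTE yX) yB (negbTE nyz) /= addr0 add0r.
case: (eqVneq i z) => [->|nez] /=; last by [].
by rewrite zX (negbTE zB) /= addrC.
Qed.

Lemma step lam x B0 : rep M' lam x -> 0 < lam X -> B0 \in B ->
  (0 < dfc B0)%N -> 0 < lam B0 ->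
  exists lam', rep M' lam' x /\ (lam' X = 0 \/ (meas lam' < meas lam)%N).
Proof.
move=> [h0 h1 h2] lX B0B dB0 lB0.
case: (HB) => _ Hex.
have cB0 := basis_card HB B0B.
have cX := card_X HB HX r2.
have k_lt : (#|B0 :&: X| < r.-1)%N by rewrite /dfc in dB0; tolia.
have c2 : (1 < #|B0 :\: X|)%N by rewrite cardsD cB0; tolia.
have /set0Pn [y0 y0D] : B0 :\: X != set0 by rewrite -card_gt0; tolia.
have c3 := cardsD1 y0 (B0 :\: X); rewrite y0D add1n in c3.
have /set0Pn [y yD] : (B0 :\: X) :\ y0 != set0 by rewrite -card_gt0; tolia.
have c4 : (1 < #|X :\: B0|)%N by rewrite cardsD cX setIC; tolia.
have /set0Pn [x0 x0D] : X :\: B0 != set0 by rewrite -card_gt0; tolia.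
move: y0D yD x0D; rewrite !inE => /andP [y0X y0B] /and3P [ny y0' yB] /andP [x0B x0X].
have yX : y \notin X by [].
have B2B : y0 |: (X :\ x0) \in B by apply: factF.
have yD : y \in B0 :\: (y0 |: (X :\ x0)).
  by rewrite !inE yB andbT negb_or ny /= negb_and yX orbT.
have [z zD C2B] := Hex B0 _ B0B B2B y yD.
move: zD; rewrite !inE => /andP [zB0 zB2].
have zX : z \in X.
  move: zB2; case: eqVneq => [ez|nz] /=; first by rewrite ez y0B in zB0.
  by case/andP.
set C2 := z |: (B0 :\ y) in C2B.
have C1B : y |: (X :\ z) \in B by apply: factF.
set C1 := y |: (X :\ z) in C1B.
have XnB := X_notB HX.
have nC1X : C1 != X by apply: contraNneq XnB => <-.
have nC2X : C2 != X by apply: contraNneq XnB => <-.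
have nB0X : B0 != X by apply: contraNneq XnB => <-.
have cC1 : #|C1 :&: X| = r.-1 by apply: (uXv_card HB HX r2).
have nC1B0 : C1 != B0 by apply/eqP => e; move: k_lt; rewrite -e cC1 ltnn.
have nC2B0 : C2 != B0 by apply: contraTneq zB0 => <-; rewrite /C2 setU11.
have cC2 : #|C2 :&: X| = (#|B0 :&: X|).+1.
  have -> : C2 :&: X = z |: (B0 :&: X).
    apply/setP => i; rewrite !inE; case: (eqVneq i z) => [->|] //=.
    by case: (eqVneq i y) => [->|] //=; rewrite (negbTE yX) andbF.
  by rewrite cardsU1 inE (negbTE zB0) /= add1n.
have eXC1 : (X == C1) = false by rewrite eq_sym (negbTE nC1X).
have eXC2 : (X == C2) = false by rewrite eq_sym (negbTE nC2X).
have eXB0 : (X == B0) = false by rewrite eq_sym (negbTE nB0X).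
have eB0X : (B0 == X) = false by rewrite (negbTE nB0X).
have eB0C1 : (B0 == C1) = false by rewrite eq_sym (negbTE nC1B0).
have eB0C2 : (B0 == C2) = false by rewrite eq_sym (negbTE nC2B0).
have ms := multiset_id yX zX yB zB0 erefl erefl.
pose mu := if lam X <= lam B0 then lam X else lam B0.
have mu0 : 0 <= mu by rewrite /mu; case: ifP => _; apply: ltW.
have muX : mu <= lam X by rewrite /mu; case: ifP => // /negbT; rewrite -ltNge => /ltW.
have muB : mu <= lam B0 by rewrite /mu; case: ifP.
pose lam' := upd (upd (upd (upd lam mu C1) mu C2) (- mu) X) (- mu) B0.
have lamE S : lam' S = lam S + mu * (S == C1)%:R + mu * (S == C2)%:R
   - mu * (S == X)%:R - mu * (S == B0)%:R.
  by rewrite /lam' /upd !mulNr.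
have sumE (g : {set 'I_n} -> R) : \sum_(S in M') lam' S * g S =
    \sum_(S in M') lam S * g S + mu * (g C1 + g C2 - g X - g B0).
  rewrite /lam' !sum_upd ?XM' ?inM'B //.
  by rewrite !mulNr !mulrDr !mulrN !addrA.
exists lam'; split.
  split.
  - move=> S; rewrite lamE.
    case: (eqVneq S X) => [->|nSX].
      by rewrite eXC1 eXC2 eXB0 /= ?mulr0n ?mulr1n ?mulr0 ?mulr1 ?addr0 ?subr0 subr_ge0.
    case: (eqVneq S B0) => [->|nSB].
      by rewrite eB0C1 eB0C2 /= ?mulr0n ?mulr1n ?mulr0 ?mulr1 ?addr0 ?subr0 subr_ge0.
    rewrite /= ?mulr0n ?mulr0 ?subr0.
    by apply: addr_ge0; first apply: addr_ge0 => //; apply: mulr_ge0.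
  - have := sumE (fun _ => 1).
    under eq_bigr => S _ do rewrite mulr1.
    under [X in _ = X + _]eq_bigr => S _ do rewrite mulr1.
    by move=> ->; rewrite h1 addrK subrr mulr0 addr0.
  - move=> i; rewrite sumE -h2.
    suff -> : (i \in C1)%:R + (i \in C2)%:R - (i \in X)%:R - (i \in B0)%:R = 0 :> R.
      by rewrite mulr0 addr0.
    by rewrite ms [(i \in X)%:R + _]addrC addrK subrr.
case: (boolP (lam X <= lam B0)) => hle; [left | right].
  rewrite lamE eXC1 eXC2 eXB0 /= ?mulr0n ?mulr1n ?mulr0 ?mulr1 ?addr0 ?subr0.
  by rewrite /mu hle eqxx /= mulr1n mulr1 subrr.
have lamB0 : lam' B0 = 0.
  rewrite lamE eB0C1 eB0C2 /= ?mulr0n ?mulr1n ?mulr0 ?mulr1 ?addr0 ?subr0.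
  by rewrite /mu (negbTE hle) eqxx eB0X /= mulr0n mulr0 subr0 mulr1 subrr.
have dC1 : dfc C1 = 0%N by rewrite /dfc cC1 subnn.
have dC2 : (dfc C2 < dfc B0)%N by rewrite /dfc cC2; rewrite /dfc in dB0; tolia.
have C2in : (C2 \in B) && (C2 != B0) by rewrite C2B nC2B0.
rewrite /meas (bigD1 B0 B0B) [X in (_ < X)%N](bigD1 B0 B0B) /=.
rewrite (bigD1 C2 C2in) [X in (_ < _ + X)%N](bigD1 C2 C2in) /=.
have w1 : wt lam' B0 = 0%N by rewrite /wt lamB0 eqxx andbF.
have w2 : wt lam B0 = (2 ^ dfc B0)%N by rewrite /wt dB0 (gt_eqF lB0).
have w3 : (wt lam' C2 < 2 ^ dfc B0)%N.
  rewrite /wt; case: ifP => _; first by rewrite ltn_exp2l.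
  by rewrite expn_gt0.
have w4 : (\sum_(S | ((S \in B) && (S != B0)) && (S != C2)) wt lam' S <=
           \sum_(S | ((S \in B) && (S != B0)) && (S != C2)) wt lam S)%N.
  apply: leq_sum => S /andP [/andP [SB nSB0] nSC2].
  case: (eqVneq S C1) => [->|nSC1]; first by rewrite /wt dC1.
  have nSX : S != X by apply: contraNneq XnB => <-.
  by rewrite /wt lamE (negbTE nSC1) (negbTE nSC2) (negbTE nSX) (negbTE nSB0) /= !mulr0n !mulr0 !addr0 !subr0.
rewrite w1 w2; move: w3 w4; set a := wt lam' C2; set b := \sum_(S | _) wt lam' S.
set c := \sum_(S | _) wt lam S; move=> h3 h4; tolia.
Qed.


Local Notation K := ((r.-1)%:R : R).

Lemma sX_ge A lam x (c : R) : rep A lam x ->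
  (forall S, S \in A -> lam S * c <= lam S * #|S :&: X|%:R) -> c <= sX X x.
Proof.
move=> hr H; rewrite (sX_rep X hr); case: hr => _ h1 _.
by rewrite -{1}(sum_K c h1); apply: sum_le.
Qed.

Lemma sX_gt A lam x (c : R) S0 : rep A lam x -> S0 \in A ->
  (forall S, S \in A -> lam S * c <= lam S * #|S :&: X|%:R) ->
  lam S0 * c < lam S0 * #|S0 :&: X|%:R -> c < sX X x.
Proof.
move=> hr S0A H lt; rewrite (sX_rep X hr); case: hr => _ h1 _.
by rewrite -{1}(sum_K c h1); apply: (sum_lt S0A).
Qed.

Lemma sX_le A lam x (c : R) : rep A lam x ->
  (forall S, S \in A -> lam S * #|S :&: X|%:R <= lam S * c) -> sX X x <= c.
Proof.
move=> hr H; rewrite (sX_rep X hr); case: hr => _ h1 _.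
by rewrite -[X in _ <= X](sum_K c h1); apply: sum_le.
Qed.

Lemma sX_lt A lam x (c : R) S0 : rep A lam x -> S0 \in A ->
  (forall S, S \in A -> lam S * #|S :&: X|%:R <= lam S * c) ->
  lam S0 * #|S0 :&: X|%:R < lam S0 * c -> sX X x < c.
Proof.
move=> hr S0A H lt; rewrite (sX_rep X hr); case: hr => _ h1 _.
by rewrite -[X in _ < X](sum_K c h1); apply: (sum_lt S0A).
Qed.



Lemma cXX : #|X :&: X| = r.
Proof. by rewrite setIid (card_X HB HX r2). Qed.

Lemma Kr : (r.-1 < r)%N.
Proof. tolia. Qed.

Lemma inM' S : S \in M' -> S = X \/ S \in B.
Proof. by rewrite /relaxation in_setU1 => /orP [/eqP ->|]; [left|right]. Qed.

Lemma meas_ind (P : ({set 'I_n} -> R) -> Prop) :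
  (forall lam, (forall lam', (meas lam' < meas lam)%N -> P lam') -> P lam) ->
  forall lam, P lam.
Proof.
move=> H lam; move: {2}(meas lam) (leqnn (meas lam)) => k.
elim: k lam => [|k IH] lam hk; apply: H => lam' lt.
  tolia.
by apply: IH; tolia.
Qed.

Lemma ptB S lam : S \in B -> 0 <= lam S -> lam S * #|S :&: X|%:R <= lam S * K.
Proof. by move=> SB h; apply: ler_wpM2l => //; rewrite ler_nat (cardIX_le HX SB). Qed.

Lemma dir1 x lam : rep M' lam x -> sX X x <= K -> mpolytope R B x.
Proof.
move: lam; apply: meas_ind => lam IH hr hs.
have [h0 h1 h2] := hr.
have [/eqP lX0|lXn] := boolP (lam X == 0).
  apply: (mpoly_supp hr) => S /inM' [->|//]; by rewrite lX0 eqxx.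
have lX : 0 < lam X by rewrite lt_def lXn h0.
have [/existsP [B0 /and3P [B0B dB0 lB0]]|/existsPn none] :=
  boolP [exists S, [&& S \in B, (0 < dfc S)%N & lam S != 0]].
  have lB0' : 0 < lam B0 by rewrite lt_def lB0 h0.
  have [lam' [hr' [lX0|lt]]] := step hr lX B0B dB0 lB0'.
    apply: (mpoly_supp hr') => S /inM' [->|//]; by rewrite lX0 eqxx.
  by apply: (IH lam' lt hr').
exfalso; move: hs; apply/negP; rewrite -ltNge.
apply: (sX_gt hr XM').
  move=> S /inM' [->|SB]; first by apply: ler_wpM2l => //; rewrite cXX ler_nat leq_pred.
  have [/eqP ->|nz] := boolP (lam S == 0); first by rewrite !mul0r.
  apply: ler_wpM2l => //; rewrite ler_nat.
  move: (none S); rewrite SB nz /= andbT -leqNgt /dfc => hd.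
  by rewrite leqn0 subn_eq0 in hd.
by rewrite ltr_pM2l // cXX ltr_nat Kr.
Qed.

Lemma noBad_N x lam : rep M' lam x ->
  (forall S, S \in B -> (0 < dfc S)%N -> lam S = 0) -> mpolytope R (NB B X) x.
Proof.
move=> hr H; apply: (mpoly_supp hr) => S SM' nz.
case: (inM' SM') => [->|SB]; first by apply: (XN HB HX r2).
rewrite inE SM' /=.
have : ~~ (0 < dfc S)%N by apply: contra nz => d; rewrite H.
by rewrite -leqNgt /dfc leqn0 subn_eq0.
Qed.

Lemma bad_lX x lam B0 : rep M' lam x -> K <= sX X x -> B0 \in B ->
  (0 < dfc B0)%N -> lam B0 != 0 -> 0 < lam X.
Proof.
move=> hr hs B0B dB0 nz; have [h0 h1 h2] := hr.
rewrite lt_def h0 andbT; apply/negP => /eqP lX0.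
move: hs; apply/negP; rewrite -ltNge.
apply: (sX_lt hr (inM'B B0B)).
  move=> S /inM' [->|SB]; first by rewrite lX0 !mul0r.
  by apply: ptB.
rewrite ltr_pM2l; last by rewrite lt_def nz h0.
by rewrite ltr_nat; rewrite /dfc in dB0; tolia.
Qed.

Lemma dir2 x lam : rep M' lam x -> K <= sX X x -> mpolytope R (NB B X) x.
Proof.
move: lam; apply: meas_ind => lam IH hr hs.
have [h0 h1 h2] := hr.
have [/existsP [B0 /and3P [B0B dB0 lB0]]|/existsPn none] :=
  boolP [exists S, [&& S \in B, (0 < dfc S)%N & lam S != 0]].
  have lX := bad_lX hr hs B0B dB0 lB0.
  have lB0' : 0 < lam B0 by rewrite lt_def lB0 h0.
  have [lam' [hr' [lX0|lt]]] := step hr lX B0B dB0 lB0'.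
    apply: (noBad_N hr') => S SB dS; apply/eqP; apply/negPn/negP => nz.
    by move: (bad_lX hr' hs SB dS nz); rewrite lX0 ltxx.
  by apply: (IH lam' lt hr').
apply: (noBad_N hr) => S SB dS; apply/eqP; move: (none S); rewrite SB dS /=.
by rewrite negbK.
Qed.

End Main.

Section Final.
Variable n : nat.
Variable B : {set {set 'I_n}}.
Hypothesis HB : is_matroid B.
Variable X : {set 'I_n}.
Hypothesis HX : circuit_hyperplane B X.
Local Notation r := (mrank B).

Lemma rk_le_r (E : {set 'I_n}) : (rk B E <= r)%N.
Proof. by apply: rk_le => I iI _; apply: indep_card. Qed.

Lemma bad_exists (E1 E2 : {set 'I_n}) : good_partition B E1 E2 -> (1 < r)%N ->
  exists2 B0, B0 \in B & (#|B0 :&: X| < r.-1)%N.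
Proof.
move=> [U [D [r1 [rr2 [a1 [a2 [/andP [a10 a1r] /andP [a20 a2r] eq P2]]]]]]] r2.
have [/existsP [B0 /andP [B0B lt]]|/existsPn H] :=
  boolP [exists S, (S \in B) && (#|S :&: X| < r.-1)%N]; first by exists B0.
exfalso.
have cX := card_X HB HX r2.
have out1 I : indep B I -> (#|I :\: X| <= 1)%N.
  case/existsP => S /andP [SB IS].
  have := H S; rewrite SB /= -leqNgt => hS.
  have : (#|I :\: X| <= #|S :\: X|)%N by apply: subset_leq_card; apply: setSD.
  rewrite [#|S :\: X|]cardsD (basis_card HB SB) => h; move: hS h.
  set c := #|S :&: X|; set d := #|I :\: X|; move=> hS h; tolia.
have rkE (E : {set 'I_n}) : (rk B E <= #|X :&: E| + 1)%N.
  apply: rk_le => I iI IE.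
  rewrite -(cardsID X I).
  have : (#|I :&: X| <= #|X :&: E|)%N.
    apply: subset_leq_card; apply/subsetP => i; rewrite !inE => /andP [iI' iX].
    by rewrite iX (subsetP IE).
  move: (out1 I iI); set c := #|I :\: X|; set d := #|I :&: X|; move=> h1 h2; tolia.
have XD : X :\: E1 = X :&: E2.
  apply/setP => i; rewrite !inE; case: (boolP (i \in X)) => iX; rewrite ?andbF ?andbT //=.
  have : i \in E1 :|: E2 by rewrite U inE.
  rewrite inE; case: (boolP (i \in E1)) => i1 /= => [_|//].
  have : i \notin E1 :&: E2 by rewrite D inE.
  by rewrite inE i1 /= => /negbTE ->.
have k12 : (#|X :&: E1| + #|X :&: E2| = r)%N by rewrite -XD cardsID cX.
have h1 := rkE E1; have h2 := rkE E2.
have ne2 : X :&: E2 != set0.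
  rewrite -card_gt0; move: h2 rr2; set c := #|X :&: E2|; set q := rk B E2; move=> hh1 hh2; tolia.
have ne1 : X :&: E1 != set0.
  rewrite -card_gt0; move: h1 r1; set c := #|X :&: E1|; set q := rk B E1; move=> hh1 hh2; tolia.
have ind (Ea Eb : {set 'I_n}) : Ea :&: Eb = set0 -> X :&: Eb != set0 -> indep B (X :&: Ea).
  move=> Dab /set0Pn [e]; rewrite inE => /andP [eX eEb].
  apply: (indep_sub (Xx_indep HX eX)); apply/subsetP => i; rewrite !inE => /andP [iX iEa].
  rewrite iX andbT; apply: contraTneq iEa => ->.
  have : e \notin Ea :&: Eb by rewrite Dab inE.
  by rewrite inE eEb andbT.
have i1 : indep B (X :&: E1) by exact: (ind E1 E2 D ne2).
have i2 : indep B (X :&: E2) by apply: (ind E2 E1 _ ne1); rewrite setIC.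
have := P2 _ _ i1 (subsetIr _ _) _ i2 (subsetIr _ _).
have -> : (X :&: E1) :|: (X :&: E2) = X by rewrite -setIUr U setIT.
have Xn := X_nindep HX.
move: eq k12 h1 h2 a10 a1r a20 a2r.
set q1 := rk B E1; set q2 := rk B E2; set c1 := #|X :&: E1|; set c2 := #|X :&: E2|.
move=> eq k12 h1 h2 a10 a1r a20 a2r.
have l1 : (c1 <= q1 - a1)%N by tolia.
have l2 : (c2 <= q2 - a2)%N by tolia.
by move=> /(_ l1 l2); rewrite (negbTE Xn).
Qed.

End Final.

Lemma sumN_sX (R : realFieldType) n (X : {set 'I_n}) (x : point R n) :
  \sum_i - (i \in X)%:R * x i = - sX X x.
Proof. by rewrite /sX -sumrN; apply: eq_bigr => i _; rewrite mulNr. Qed.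

Unset Implicit Arguments.
Unset Strict Implicit.
Theorem corollary2 (R : realFieldType) (n : nat) (B : {set {set 'I_n}})
  (E1 E2 : {set 'I_n}) (X : {set 'I_n}) :
  is_matroid B -> good_partition B E1 E2 -> circuit_hyperplane B X ->
  has_nontrivial_hyperplane_split R (relaxation B X).
Proof.
move=> HB gp HX.
have r2 : (1 < mrank B)%N.
  case: gp => _ [_ [r1 _]]; apply: (leq_trans r1); apply: rk_le_r.
pose K := ((mrank B).-1%:R : R).
have NBsub : NB B X \subset relaxation B X.
  by apply/subsetP => S; rewrite inE => /andP [].
have Bsub : B \subset relaxation B X by apply: subsetUr.
have PM_le x : mpolytope R B x -> sX X x <= K.
  case=> lam hr; apply: (sX_le hr) => S SB; apply: (ptB HX SB); by case: hr.
have PN_ge x : mpolytope R (NB B X) x -> K <= sX X x.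
  case=> lam hr; apply: (sX_ge hr) => S; rewrite inE => /andP [_ h].
  by apply: ler_wpM2l; [case: hr | rewrite ler_nat].
exists B, (NB B X); split; first split.
- exact: HB.
- exact: (NB_matroid HB HX r2).
- move=> x; split.
    case=> lam hr.
    have [h|h] := leP (sX X x) K.
      by left; apply: (dir1 HB HX r2 hr).
    by right; apply: (dir2 HB HX r2 hr); apply: ltW.
  by case=> h; [apply: (mpoly_sub Bsub) | apply: (mpoly_sub NBsub)].
- exists (fun i => (i \in X)%:R), K; split; first exact: PM_le.
  move=> x; split.
    case=> hM hN; split => //; apply/eqP; rewrite eq_le PM_le //= PN_ge //.
  case=> hM hs; split => //.
  case: hM => lam hr; apply: (mpoly_supp hr) => S SB nz.
  rewrite inE (subsetP Bsub) //=.
  rewrite leqNgt; apply/negP => lt.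
  have := sX_lt hr SB (fun S SB => ptB HX SB (let: And3 h0 _ _ := hr in h0 S)).
  move=> /(_ _) H.
  have : sX X x < K.
    apply: H; rewrite ltr_pM2l; first by rewrite ltr_nat.
    by rewrite lt_def nz; case: hr => h0 _ _; apply: h0.
  by rewrite /sX hs ltxx.
- exists (fun i => - (i \in X)%:R), (- K); split.
    by move=> x hN; rewrite sumN_sX lerN2; apply: PN_ge.
  move=> x; split.
    case=> hM hN; split => //; apply/eqP; rewrite sumN_sX eqr_opp eq_le PM_le //= PN_ge //.
  rewrite sumN_sX => [[hN /oppr_inj hs]]; split => //.
  case: hN => lam hr.
  have [h0 h1 h2] := hr.
  have lX0 : lam X = 0.
    apply/eqP; apply/negPn/negP => nz.
    have : K < sX X x.
      apply: (sX_gt hr (XN HB HX r2)).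
        move=> S; rewrite inE => /andP [_ h].
        by apply: ler_wpM2l => //; rewrite ler_nat.
      rewrite ltr_pM2l; last by rewrite lt_def nz h0.
      by rewrite (cXX HB HX r2) ltr_nat; move: r2; case: (mrank B).
    by rewrite hs ltxx.
  apply: (mpoly_supp hr) => S SN nz.
  move: SN; rewrite inE => /andP [/inM' [eSX|//] _].
  by move: nz; rewrite eSX lX0 eqxx.
- split.
    have hx : mpolytope R (relaxation B X) (fun i => (i \in X)%:R).
      by exists (fun S => (S == X)%:R); apply: rep_delta; apply: XM'.
    move=> /(_ (fun i => (i \in X)%:R)) [_ /(_ hx)] hM.
    have := PM_le _ hM.
    rewrite (sX_rep X (rep_delta R (XM' B X))) sum_delta ?XM' //.
    rewrite (cXX HB HX r2) /K ler_nat => h; move: r2 h.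
    by case: (mrank B) => // m _ /=; rewrite ltnn.
  have [B0 B0B lt] := bad_exists HB HX gp r2.
  have B0M : B0 \in relaxation B X by rewrite (subsetP Bsub).
  have hx : mpolytope R (relaxation B X) (fun i => (i \in B0)%:R).
    by exists (fun S => (S == B0)%:R); apply: rep_delta.
  move=> /(_ (fun i => (i \in B0)%:R)) [_ /(_ hx)] hN.
  have := PN_ge _ hN.
  rewrite (sX_rep X (rep_delta R B0M)) sum_delta //.
  by rewrite /K ler_nat leqNgt lt.
Qed.
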